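(* Let $G=(V,E)$ be an $n$-vertex graph, $q>0$ an integer, and $0<\alpha<1$. Let $V_\alpha=\{v\in V: r(v)\ge\alpha\}$. Then $|V_\alpha|\le c_q/\alpha$, where $c_q=\sum_{i=0}^{q}q^i$.
   Context: $q$-random BFS ($q$-RBFS) from a vertex $v$ in the random neighbor model (where a random neighbor query for $u$ returns a uniformly random neighbor of $u$): initialize a queue $Q=(v)$, level $\ell[v]=0$ (all others $\infty$), and $H=(\{v\},\emptyset)$ rooted at $v$; while $Q$ is nonempty, pop $u$ and make $q$ independent random neighbor queries for $u$ obtaining $s_{u,1},\dots,s_{u,q}$; for each $i$ add $s_{u,i}$ and the edge $\{u,s_{u,i}\}$ to $H$, and if $\ell[u]<q-1$ and $\ell[s_{u,i}]=\infty$, set $\ell[s_{u,i}]=\ell[u]+1$ and enqueue $s_{u,i}$; return $H$ (undirected, simple). The reach probability $r(v)=r_q(v)$ of a vertex $v$ is the probability that a $q$-RBFS started at a uniformly random vertex of $V$ reaches (i.e., includes in its returned graph) $v$. *)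

(* Defs.v *)
From HB Require Import structures.
From mathcomp Require Import all_boot all_order all_algebra.
Set Implicit Arguments. Unset Strict Implicit. Unset Printing Implicit Defensive.
Import Order.TTheory GRing.Theory Num.Theory.
Local Open Scope ring_scope.

Definition simple_graph (T : finType) (e : rel T) : Prop :=
  symmetric e /\ irreflexive e.

Section RBFS.
Variables (R : realFieldType) (T : finType) (e : rel T) (q : nat) (v : T).

Definition nbhd (u : T) : {set T} := [set s | e u s].

(* [rbfs_run fuel Q lvl Hv] is the probability (over the random neighbour
   queries) that the target vertex [v] belongs to the vertex set of the graph
   H returned by the q-RBFS, when the current state of the algorithm is
   queue [Q], level function [lvl] (None = infinity) and vertex set [Hv] of H.
   The edges of H do not influence the execution, so only its vertex set is
   tracked.  [fuel] bounds the number of remaining queue pops; every vertex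
   is enqueued at most once, so fuel #|T| is enough to run to completion.
   The q queries of the popped vertex u are performed one after the other,
   each being uniform over the neighbours of u (averaging over outcomes). *)
Fixpoint rbfs_run (fuel : nat) (Q : seq T) (lvl : T -> option nat)
    (Hv : {set T}) : R :=
  match fuel with
  | 0 => (v \in Hv)%:R
  | fuel'.+1 =>
    match Q with
    | [::] => (v \in Hv)%:R
    | u :: Q' =>
      let l := odflt 0%N (lvl u) in
      let fix qry (k : nat) (Q : seq T) (lvl : T -> option nat)
                  (Hv : {set T}) : R :=
        match k with
        | 0 => rbfs_run fuel' Q lvl Hv
        | k'.+1 =>
          if #|nbhd u| == 0%N then qry k' Q lvl Hv
          else
            (\sum_(s in nbhd u)
               (if (l < q.-1)%N && (lvl s == None) then
                  qry k' (rcons Q s)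
                      (fun x => if x == s then Some l.+1 else lvl x)
                      (s |: Hv)
                else qry k' Q lvl (s |: Hv)))
            / #|nbhd u|%:R
        end
      in qry q Q' lvl Hv
    end
  end.

Definition reach_from (w : T) : R :=
  rbfs_run #|T| [:: w] (fun x => if x == w then Some 0%N else None) [set w].

End RBFS.

Definition reach_prob (R : realFieldType) (T : finType) (e : rel T) (q : nat)
    (v : T) : R :=
  (\sum_(w : T) reach_from R e q v w) / #|T|%:R.

Definition c_q (q : nat) : nat := (\sum_(i < q.+1) q ^ i)%N.

(* Main.v *)
Require Import Defs.
From HB Require Import structures.
From mathcomp Require Import all_boot all_order all_algebra zify.
Import Order.TTheory GRing.Theory Num.Theory.
Local Open Scope ring_scope.

Section Aux.
Variables (R : realFieldType) (T : finType) (e : rel T) (q : nat).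

Fixpoint F (k : nat) : nat := match k with 0 => q | k.+1 => q + q * F k end.
Definition g (l : nat) : nat := F (q.-1 - l).

Lemma F_mono : {homo F : i j / (i <= j)%N >-> (i <= j)%N}.
Proof.
apply: homo_leq => //; first by move=> ???; apply: leq_trans.
elim=> [|k IH] /=; first by rewrite leq_addr.
by rewrite leq_add2l leq_mul2l IH orbT.
Qed.

Lemma g_anti m : (g m <= g 0)%N.
Proof. by apply: F_mono; rewrite subn0 leq_subr. Qed.

Definition cst (l : nat) : nat := (1 + (if (l < q.-1)%N then g l.+1 else 0))%N.

Lemma q_cst l : (q * cst l)%N = g l.
Proof.
rewrite /cst /g; case: ifP => Hl.
  by rewrite -[(q.-1 - l)%N](subnSK Hl) /= mulnDr muln1.
by rewrite addn0 muln1; move/negbT: Hl; rewrite -leqNgt -subn_eq0 => /eqP ->.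
Qed.

Lemma F_sum k : (1 + F k)%N = (\sum_(i < k.+2) q ^ i)%N.
Proof.
elim: k => [|k IH]; first by rewrite !big_ord_recr /= big_ord0 expn1.
rewrite big_ord_recl /= expn0 -[(q + _)%N]/(F k.+1) /=.
congr (_ + _)%N.
under eq_bigr do rewrite /bump /= add1n expnS.
by rewrite -big_distrr /= -IH mulnDr muln1.
Qed.

Definition Phi (Q : seq T) (lvl : T -> option nat) (Hv : {set T}) : nat :=
  (#|Hv| + \sum_(x <- Q) g (odflt 0%N (lvl x)))%N.

Definition qryf (u : T) (l : nat) (rec : seq T -> (T -> option nat) -> {set T} -> R) :=
  fix qry (k : nat) (Q : seq T) (lvl : T -> option nat)
                  (Hv : {set T}) : R :=
        match k with
        | 0 => rec Q lvl Hv
        | k'.+1 =>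
          if #|nbhd e u| == 0%N then qry k' Q lvl Hv
          else
            (\sum_(s in nbhd e u)
               (if (l < q.-1)%N && (lvl s == None) then
                  qry k' (rcons Q s)
                      (fun x => if x == s then Some l.+1 else lvl x)
                      (s |: Hv)
                else qry k' Q lvl (s |: Hv)))
            / #|nbhd e u|%:R
        end.

Lemma run_unfold v fuel u Q lvl Hv :
  rbfs_run R e q v fuel.+1 (u :: Q) lvl Hv =
  qryf u (odflt 0%N (lvl u)) (rbfs_run R e q v fuel) q Q lvl Hv.
Proof. by []. Qed.


Lemma qry_bound u l (rec : T -> seq T -> (T -> option nat) -> {set T} -> R) :
  (forall Q lvl Hv, \sum_v rec v Q lvl Hv <= (Phi Q lvl Hv)%:R) ->
  forall k Q lvl Hv,
  \sum_v qryf u l (rec v) k Q lvl Hv <= (Phi Q lvl Hv + k * cst l)%:R.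
Proof.
move=> Hrec; elim=> [|k IH] Q lvl Hv /=.
  by rewrite mul0n addn0.
have [Hd|Hd] := eqVneq #|nbhd e u| 0%N.
  apply: le_trans (IH _ _ _) _; rewrite ler_nat leq_add2l.
  exact: leq_mul (leqnSn k) (leqnn _).
rewrite -mulr_suml exchange_big /=.
have dpos : 0 < (#|nbhd e u|%:R : R) by rewrite ltr0n lt0n.
rewrite ler_pdivrMr // mulr_natr.
set B := ((Phi Q lvl Hv + k.+1 * cst l)%:R : R).
have -> : B *+ #|nbhd e u| = \sum_(s in nbhd e u) B by rewrite sumr_const.
rewrite {}/B; apply: ler_sum => s Hs.
have h1 : (#|s |: Hv| <= 1 + #|Hv|)%N by rewrite cardsU1 leq_add2r leq_b1.
case Hc: ((l < q.-1)%N && (lvl s == None)); apply: le_trans (IH _ _ _) _; rewrite ler_nat.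
  move/andP: Hc => [Hl Hlvl].
  rewrite /Phi -cats1 big_cat big_seq1 /= eqxx /=.
  have h2 : (\sum_(x <- Q) g (odflt 0%N (if x == s then Some l.+1 else lvl x))
     <= \sum_(x <- Q) g (odflt 0%N (lvl x)))%N.
    apply: leq_sum => x _; case: eqP => [->|//].
    by rewrite (eqP Hlvl) /=; apply: g_anti.
  rewrite mulSn /cst Hl; lia.
rewrite /Phi mulSn /cst; lia.
Qed.

Lemma qry_ge0 u l rec : (forall Q lvl Hv, 0 <= rec Q lvl Hv) ->
  forall k Q lvl Hv, 0 <= qryf u l rec k Q lvl Hv.
Proof.
move=> Hrec; elim=> [|k IH] Q lvl Hv /=; first exact: Hrec.
case: ifP => _; first exact: IH.
apply: divr_ge0 => //; apply: sumr_ge0 => s _; case: ifP => _; exact: IH.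
Qed.

Lemma run_ge0 v fuel Q lvl Hv : 0 <= rbfs_run R e q v fuel Q lvl Hv.
Proof.
elim: fuel Q lvl Hv => [|f IH] [|u Q] lvl Hv; try by rewrite /= ler0n.
rewrite run_unfold; apply: qry_ge0 => *; exact: IH.
Qed.

Lemma base_sum (A : {set T}) : \sum_v ((v \in A)%:R : R) = #|A|%:R.
Proof.
rewrite (bigID (fun v => v \in A)) /= [X in _ + X]big1 => [|v /negbTE -> //].
rewrite addr0 (eq_bigr (fun _ => 1)) => [|v -> //].
by rewrite sumr_const.
Qed.

Lemma run_bound fuel Q lvl Hv :
  \sum_v rbfs_run R e q v fuel Q lvl Hv <= (Phi Q lvl Hv)%:R.
Proof.
elim: fuel Q lvl Hv => [|f IH] [|u Q] lvl Hv;
  try by rewrite /= base_sum ler_nat /Phi leq_addr.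
rewrite (eq_bigr _ (fun v _ => run_unfold v f u Q lvl Hv)).
apply: le_trans (qry_bound u (odflt 0%N (lvl u)) (fun v => rbfs_run R e q v f) _ q Q lvl Hv) _.
  exact: IH.
rewrite ler_nat q_cst /Phi big_cons; lia.
Qed.

End Aux.

Theorem lemma3p7 (R : realFieldType) (T : finType) (e : rel T) (q : nat)
    (alpha : R) :
  simple_graph e -> (0 < q)%N -> 0 < alpha -> alpha < 1 ->
  #|[set v : T | alpha <= reach_prob R e q v]|%:R <= (c_q q)%:R / alpha.
Proof.
move=> _ q0 a0 _.
set V := [set v : T | alpha <= reach_prob R e q v].
have rge0 v : 0 <= reach_prob R e q v.
  rewrite /reach_prob; apply: divr_ge0 => //; apply: sumr_ge0 => w _.
  exact: run_ge0.
have Hsum : \sum_v reach_prob R e q v <= (c_q q)%:R.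
  case: (posnP #|T|) => Hn.
    rewrite big1 ?ler0n // => v _.
    by rewrite /reach_prob Hn invr0 mulr0.
  rewrite /reach_prob -mulr_suml exchange_big /= ler_pdivrMr ?ltr0n //.
  rewrite mulr_natr.
  have -> : (c_q q)%:R *+ #|T| = \sum_(w : T) ((c_q q)%:R : R).
    by rewrite sumr_const.
  apply: ler_sum => w _; rewrite /reach_from.
  apply: le_trans (run_bound _ _ _ _ _ _ _ _) _.
  rewrite ler_nat /Phi cards1 big_seq1 /= eqxx /= /g subn0 /c_q F_sum.
  by rewrite prednK.
rewrite ler_pdivlMr //; apply: le_trans Hsum.
rewrite (bigID (fun v => v \in V)) /= -[X in X <= _]addr0.
apply: lerD; last by apply: sumr_ge0 => v _.
rewrite mulr_natl.
have <- : \sum_(v in V) alpha = alpha *+ #|V| by rewrite sumr_const.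
by apply: ler_sum => v; rewrite inE.
Qed.
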